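(* Let $A\in\mathcal C$, let $U$ be an independent subset of $A$ and $V$ an independent subset of $T$, and let $f:{\rm desc}(U)\to{\rm desc}(V)$ be an isomorphism. Let $Q$ be the set of $q$-element subsets $p\subseteq U$ such that $p$ has a common predecessor in $A$ and $f(p)$ has a common predecessor in $T$. For $p\in Q$ let $w_p$ be a common predecessor of $p$ in $A$ and $w_{f(p)}$ a common predecessor of $f(p)$ in $T$. Put $U'=(U\setminus\bigcup Q)\cup\{w_p: p\in Q\}$ and $V'=(V\setminus\bigcup_{p\in Q}f(p))\cup\{w_{f(p)}:p\in Q\}$. Then: (a) $U'$ and $V'$ are independent subsets of $A$ and $T$ respectively, and the extension $F$ of $f$ which maps $w_p$ to $w_{f(p)}$ for each $p\in Q$ is an isomorphism from ${\rm desc}(U')$ to ${\rm desc}(V')$; (b) if $I\subseteq A$ is disjoint from $U$ and $U\cup I$ is an independent subset of $A$, then $U'\cup I$ is also independent.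
   Context: Fix an integer $q\ge2$; $T=T_q$ is the digraph whose vertices are finite sequences over $\{0,\ldots,q-1\}$ with edges $(\bar w,\bar wi)$. For a digraph, an $s$-arc ($s\ge0$) from $u_0$ to $u_s$ is a sequence $u_0\ldots u_s$ with each $(u_i,u_{i+1})$ an edge and $u_{i-1}\ne u_{i+1}$ for $0<i<s$; ${\rm desc}(u)$ is the set of vertices reachable from $u$ by some $s$-arc, $s\ge0$ (including $u$), and ${\rm desc}(Y)=\bigcup_{y\in Y}{\rm desc}(y)$; descendant sets are considered as induced subdigraphs. A descendant-closed set $B$ is finitely generated if $B={\rm desc}(Z)$ for a finite $Z$. A subset is independent if the descendant sets of any two distinct members are disjoint. A common predecessor of a set $X$ of vertices is a vertex $a$ with $(a,x)$ an edge for all $x\in X$. $\mathcal C$ is the class of digraphs $A$ such that ${\rm desc}(a)\cong T$ for every $a\in A$, $A={\rm desc}(Z)$ for some finite $Z$, and ${\rm desc}(a)\cap{\rm desc}(b)$ is finitely generated for all $a,b\in A$. *)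

(* Defs.v *)
From mathcomp Require Import all_boot.
From Stdlib Require List.
Set Implicit Arguments. Unset Strict Implicit. Unset Printing Implicit Defensive.

Section Digraphs.
Variable V : Type.
Variable E : V -> V -> Prop.

Definition sarc (a v : V) : Prop :=
  exists (s : nat) (u : nat -> V),
    [/\ u 0 = a, u s = v,
        (forall i, i < s -> E (u i) (u i.+1)) &
        (forall i, 0 < i -> i < s -> u i.-1 <> u i.+1)].

Definition desc (a : V) : V -> Prop := fun v => sarc a v.

Definition descS (Y : V -> Prop) : V -> Prop :=
  fun v => exists y, Y y /\ desc y v.

Definition descL (Z : seq V) : V -> Prop :=
  fun v => exists z, Stdlib.Lists.List.In z Z /\ desc z v.

Definition fin_gen (B : V -> Prop) : Prop :=
  exists Z : seq V, forall v, B v <-> descL Z v.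

Definition independent (X : V -> Prop) : Prop :=
  forall x y, X x -> X y -> x <> y -> forall v, desc x v -> desc y v -> False.

Definition common_pred (X : V -> Prop) (a : V) : Prop :=
  forall x, X x -> E a x.

End Digraphs.

Definition card_eq (V : Type) (n : nat) (X : V -> Prop) : Prop :=
  exists l : seq V, [/\ Stdlib.Lists.List.NoDup l, size l = n & forall x, X x <-> Stdlib.Lists.List.In x l].

Definition img (A B : Type) (f : A -> B) (X : A -> Prop) : B -> Prop :=
  fun y => exists x, X x /\ f x = y.

Definition iso_on (A B : Type) (EA : A -> A -> Prop) (X : A -> Prop)
    (EB : B -> B -> Prop) (Y : B -> Prop) (g : A -> B) : Prop :=
  [/\ (forall x, X x -> Y (g x)),
      (forall x y, X x -> X y -> g x = g y -> x = y),
      (forall y, Y y -> exists x, X x /\ g x = y) &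
      (forall x y, X x -> X y -> (EA x y <-> EB (g x) (g y)))].

Definition Tvert (q : nat) := seq 'I_q.
Definition Tedge (q : nat) (w v : Tvert q) : Prop := exists i : 'I_q, v = rcons w i.

Definition inC (q : nat) (A : Type) (EA : A -> A -> Prop) : Prop :=
  [/\ (forall a : A, exists g : A -> Tvert q,
          iso_on EA (desc EA a) (@Tedge q) (fun _ => True) g),
      (exists Z : seq A, forall v, descL EA Z v) &
      (forall a b : A, fin_gen EA (fun v => desc EA a v /\ desc EA b v))].

Definition Qset (A B : Type) (EA : A -> A -> Prop) (EB : B -> B -> Prop)
    (q : nat) (f : A -> B) (U : A -> Prop) (p : A -> Prop) : Prop :=
  [/\ card_eq q p, (forall x, p x -> U x),
      (exists a, common_pred EA p a) & (exists b, common_pred EB (img f p) b)].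

(* Main.v *)
Require Import Defs.
From mathcomp Require Import all_boot.
From mathcomp Require Import zify.
From Stdlib Require Import Relations ClassicalEpsilon FunctionalExtensionality PropExtensionality.
From Stdlib Require List.
Set Implicit Arguments. Unset Strict Implicit. Unset Printing Implicit Defensive.

Notation RT E := (clos_refl_trans _ E).

Lemma desc_rt (V : Type) (E : V -> V -> Prop)
  (no2 : forall x y, E x y -> E y x -> False) a v :
  desc E a v <-> RT E a v.
Proof.
split.
- move=> [s [u [h0 hs hE _]]].
  suff H : forall k, k <= s -> RT E a (u k) by rewrite -hs; apply: H.
  elim=> [|k IH] hk; first by rewrite h0; apply: rt_refl.
  apply: rt_trans (IH (ltnW hk)) _; apply: rt_step; exact: hE.
- move=> H; apply clos_rt_rt1n in H; elim: H => [x|x y z Exy _ [s [u [h0 hs hE hN]]]].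
  + by exists 0, (fun _ => x); split.
  + exists s.+1, (fun i => if i is i'.+1 then u i' else x); split => //.
    * by move=> [|i] hi /=; [rewrite h0 | apply: hE].
    * move=> [|[|i]] // _ hi /=.
      - move=> exu; have s0 : 0 < s by [].
        have := hE 0 s0; rewrite h0 -exu => Eyx; exact: no2 Exy Eyx.
      - by apply: (hN i.+1).
Qed.

Lemma rt_n1_dec (V : Type) (E : V -> V -> Prop) a v :
  RT E a v -> a = v \/ exists z, RT E a z /\ E z v.
Proof.
move=> H; apply clos_rt_rtn1 in H; case: H => [|y z Ey H]; first by left.
right; exists y; split => //; exact: clos_rtn1_rt.
Qed.

Lemma rt_1n_dec (V : Type) (E : V -> V -> Prop) a v :
  RT E a v -> a = v \/ exists c, E a c /\ RT E c v.
Proof.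
move=> H; apply clos_rt_rt1n in H; case: H => [|y z Ey H]; first by left.
right; exists y; split => //; exact: clos_rt1n_rt.
Qed.

Lemma in_map_In (X : Type) (q : nat) (h : X -> 'I_q) (l : seq X) j :
  j \in map h l <-> exists x, List.In x l /\ h x = j.
Proof.
elim: l => [|x l IH] /=; first by split => // [[x []]].
rewrite in_cons; split.
- case/orP => [/eqP ->|/IH [y [Hy <-]]]; first by exists x; auto.
  by exists y; auto.
- move=> [y [[<-|Hy] hy]]; first by rewrite hy eqxx.
  by apply/orP; right; apply/IH; exists y.
Qed.

Lemma pigeon (X : Type) (q : nat) (l : seq X) (h : X -> 'I_q) :
  List.NoDup l -> size l = q ->
  (forall x y, List.In x l -> List.In y l -> h x = h y -> x = y) ->
  forall j, exists x, List.In x l /\ h x = j.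
Proof.
move=> nd sz inj j.
have U : uniq (map h l).
  elim: l nd inj {sz} => [|x l IH] //= nd inj.
  inversion nd; subst; apply/andP; split.
  - apply/negP => /in_map_In [y [Hy Hyx]].
    have := inj y x (or_intror Hy) (or_introl erefl) Hyx.
    by move=> E; subst.
  - apply: IH => // a b Ha Hb; apply: inj; auto.
apply/in_map_In; apply/negPn/negP => hj.
have := max_card [predU1 j & map h l].
rewrite cardU1 hj card_ord (card_uniqP U) size_map sz.
by rewrite add1n ltnn.
Qed.

Lemma card_img (X Y : Type) (n : nat) (f : X -> Y) (p : X -> Prop) :
  card_eq n p -> (forall x y, p x -> p y -> f x = f y -> x = y) ->
  card_eq n (img f p).
Proof.
move=> [l [nd sz hl]] inj.
have inmap : forall y, List.In y (map f l) <-> exists x, List.In x l /\ f x = y.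
  move=> y; elim: l {nd sz hl} => [|x l IH] /=; first by split => // [[x []]].
  split.
  - case=> [<-|/IH [z [Hz <-]]]; first by exists x; auto.
    by exists z; auto.
  - move=> [z [[<-|Hz] hz]]; first by left.
    by right; apply/IH; exists z.
exists (map f l); split.
- have inj' : forall x y, List.In x l -> List.In y l -> f x = f y -> x = y.
    by move=> x y /hl Hx /hl Hy; apply: inj.
  elim: l nd inj' {sz hl inmap} => [|x l IH] nd inj' /=; first by constructor.
  inversion nd; subst; constructor.
  + move=> Hin.
    have [z [Hz Hzx]] : exists z, List.In z l /\ f z = f x.
      clear -Hin; elim: l Hin => [|z l IH] //= [<-|H]; first by exists z; auto.
      by have [z' [? ?]] := IH H; exists z'; auto.
    have := inj' z x (or_intror Hz) (or_introl erefl) Hzx.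
    by move=> E; subst.
  + by apply: IH => // a b Ha Hb; apply: inj'; right.
- by rewrite size_map.
- move=> y; rewrite inmap; split.
  + by move=> [x [/hl Hx <-]]; exists x.
  + by move=> [x [/hl Hx <-]]; exists x.
Qed.

Lemma childT (q : nat) (b : Tvert q) (P : Tvert q -> Prop) :
  card_eq q P -> common_pred (@Tedge q) P b ->
  forall t, @Tedge q b t -> P t.
Proof.
move=> [l [nd sz hl]] cp t [j ->].
have hx : forall x, List.In x l -> x = rcons b (last j x).
  move=> x /hl /cp [i ->]; by rewrite last_rcons.
have [x [Hx hxj]] := @pigeon _ _ l (fun x => last j x) nd sz
   (fun x y Hx Hy e => etrans (hx x Hx) (etrans (congr1 _ e) (esym (hx y Hy)))) j.
by apply/hl; rewrite -hxj -hx.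
Qed.

Lemma iso_size (q : nat) (A : Type) (EA : A -> A -> Prop)
  (no2 : forall x y, EA x y -> EA y x -> False) (a : A) (g : A -> Tvert q) :
  iso_on EA (desc EA a) (@Tedge q) (fun _ => True) g ->
  forall y, RT EA a y -> size (g a) <= size (g y).
Proof.
move=> [gm gi gs gE] y H; apply clos_rt_rtn1 in H.
elim: H => [|y' z Eyz H IH] //.
have Hy : RT EA a y' by exact: clos_rtn1_rt.
have : @Tedge q (g y') (g z).
  apply/gE => //; apply/(desc_rt no2) => //.
  exact: rt_trans Hy (rt_step _ _ _ _ Eyz).
by move=> [i ->]; rewrite size_rcons; apply: leq_trans IH (leqnSn _).
Qed.

Lemma retA (q : nat) (A : Type) (EA : A -> A -> Prop)
  (hAg : forall a : A, exists g : A -> Tvert q,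
          iso_on EA (desc EA a) (@Tedge q) (fun _ => True) g)
  (no2 : forall x y, EA x y -> EA y x -> False) (a y : A) :
  RT EA a y -> EA y a -> False.
Proof.
move=> Hy Eya; have [g hg] := hAg a.
have hs := iso_size no2 hg Hy.
have [gm gi gs gE] := hg.
have : @Tedge q (g y) (g a).
  by apply/gE => //; apply/(desc_rt no2) => //; apply: rt_refl.
move=> [i e]; move: hs; rewrite e size_rcons ltnn //.
Qed.

Lemma rootA (q : nat) (A : Type) (EA : A -> A -> Prop)
  (hAg : forall a : A, exists g : A -> Tvert q,
          iso_on EA (desc EA a) (@Tedge q) (fun _ => True) g)
  (no2 : forall x y, EA x y -> EA y x -> False) (a : A) g :
  iso_on EA (desc EA a) (@Tedge q) (fun _ => True) g -> g a = [::].
Proof.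
move=> hg; have [gm gi gs gE] := hg.
case/lastP E: (g a) => [//|t i].
have [z [Dz gz]] := gs t I.
have Hz : RT EA a z by apply/(desc_rt no2).
have : EA z a.
  apply/gE => //; first by apply/(desc_rt no2); apply: rt_refl.
  by rewrite gz E; exists i.
by move/(retA hAg no2 Hz).
Qed.

Lemma childA (q : nat) (A : Type) (EA : A -> A -> Prop)
  (hAg : forall a : A, exists g : A -> Tvert q,
          iso_on EA (desc EA a) (@Tedge q) (fun _ => True) g)
  (no2 : forall x y, EA x y -> EA y x -> False) (a : A) (p : A -> Prop) :
  card_eq q p -> common_pred EA p a -> forall y, EA a y -> p y.
Proof.
move=> cp cpp y Eay; have [g hg] := hAg a.
have r := rootA hAg no2 hg.
have [gm gi gs gE] := hg.
have da : forall x, EA a x -> desc EA a x.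
  by move=> x Ex; apply/(desc_rt no2); apply: rt_step.
have ci : card_eq q (img g p).
  apply: (@card_img _ _ q g p cp) => x x' Hx Hx'; apply: gi; apply: da; exact: cpp.
have cpi : common_pred (@Tedge q) (img g p) [::].
  move=> t [x [Hx <-]]; rewrite -r.
  have daa : desc EA a a by apply/(desc_rt no2); apply: rt_refl.
  by apply/(gE _ _ daa (da _ (cpp _ Hx))); apply: cpp.
have : @Tedge q [::] (g y).
  have daa : desc EA a a by apply/(desc_rt no2); apply: rt_refl.
  by rewrite -r; apply/(gE _ _ daa (da _ Eay)).
move/(childT ci cpi) => [x [Hx e]].
by have -> : y = x by apply: gi; [apply: da | apply: da; exact: cpp | done].
Qed.

Lemma dS (V : Type) (E : V -> V -> Prop)
  (no2 : forall x y, E x y -> E y x -> False) (X : V -> Prop) x :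
  descS E X x <-> exists u, X u /\ RT E u x.
Proof.
split => -[u [Xu H]]; exists u; split => //; by apply/(desc_rt no2).
Qed.

Lemma pred_ext (X : Type) (p p' : X -> Prop) :
  (forall x, p x <-> p' x) -> p = p'.
Proof.
move=> H; apply: functional_extensionality => x.
by apply: propositional_extensionality.
Qed.

Lemma rtt (V : Type) (E : V -> V -> Prop) x y z : RT E x y -> RT E y z -> RT E x z.
Proof. exact: rt_trans. Qed.
Lemma rts (V : Type) (E : V -> V -> Prop) x y : E x y -> RT E x y.
Proof. exact: rt_step. Qed.
Lemma rtr (V : Type) (E : V -> V -> Prop) x : RT E x x.
Proof. exact: rt_refl. Qed.
Arguments rtr {V E x}.
Theorem lemma3p2 (q : nat) (hq : 2 <= q)
  (A : Type) (EA : A -> A -> Prop) (hA : inC q EA)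
  (U : A -> Prop) (V : Tvert q -> Prop)
  (hU : independent EA U) (hV : independent (@Tedge q) V)
  (f : A -> Tvert q)
  (hf : iso_on EA (descS EA U) (@Tedge q) (descS (@Tedge q) V) f)
  (w : (A -> Prop) -> A) (w' : (A -> Prop) -> Tvert q)
  (hw : forall p, Qset EA (@Tedge q) q f U p -> common_pred EA p (w p))
  (hw' : forall p, Qset EA (@Tedge q) q f U p ->
           common_pred (@Tedge q) (img f p) (w' p)) :
  let Q := Qset EA (@Tedge q) q f U in
  let U' := fun x => (U x /\ ~ (exists p, Q p /\ p x)) \/
                     (exists p, Q p /\ x = w p) in
  let V' := fun y => (V y /\ ~ (exists p, Q p /\ img f p y)) \/
                     (exists p, Q p /\ y = w' p) in
  (independent EA U' /\ independent (@Tedge q) V' /\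
   exists F : A -> Tvert q,
     [/\ (forall x, descS EA U x -> F x = f x),
         (forall p, Q p -> F (w p) = w' p) &
         iso_on EA (descS EA U') (@Tedge q) (descS (@Tedge q) V') F]) /\
  (forall I : A -> Prop, (forall x, I x -> ~ U x) ->
     independent EA (fun x => U x \/ I x) ->
     independent EA (fun x => U' x \/ I x)).
Proof.
move=> Q U' V'.
have [hAg _ _] := hA.
have i1 : forall (x y : Tvert q), @Tedge q x y -> size y = (size x).+1.
  by move=> x y [i ->]; rewrite size_rcons.
have no2T : forall x y : Tvert q, @Tedge q x y -> @Tedge q y x -> False.
  move=> x y /i1 e1 /i1 e2; lia.
have no2A : forall x y, EA x y -> EA y x -> False.
  move=> x y Exy Eyx; have [g [gm gi gs gE]] := hAg x.
  have dxx : desc EA x x by exists 0, (fun _ => x); split.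
  have dxy : desc EA x y.
    exists 1, (fun i => if i is 0 then x else y); split => //.
    - by move=> [|i].
    - by move=> [|i].
  exact: no2T ((gE x y dxx dxy).1 Exy) ((gE y x dxy dxx).1 Eyx).
have dA := desc_rt no2A; have dT := desc_rt no2T.
pose DU := fun x => exists u, U u /\ RT EA u x.
pose DV := fun y => exists v, V v /\ RT (@Tedge q) v y.
have hU' : forall x y, U x -> U y -> x <> y -> forall v, RT EA x v -> RT EA y v -> False.
  by move=> x y Ux Uy ne v H1 H2; apply: (hU x y Ux Uy ne v); apply/dA.
have hV' : forall x y, V x -> V y -> x <> y -> forall v, RT (@Tedge q) x v -> RT (@Tedge q) y v -> False.
  by move=> x y Ux Uy ne v H1 H2; apply: (hV x y Ux Uy ne v); apply/dT.
have [fm fi fs fE] := hf.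
have fm' : forall x, DU x -> DV (f x) by move=> x /(dS no2A) /fm /(dS no2T).
have fi' : forall x y, DU x -> DU y -> f x = f y -> x = y.
  by move=> x y /(dS no2A) Hx /(dS no2A) Hy; apply: fi.
have fs' : forall y, DV y -> exists x, DU x /\ f x = y.
  move=> y /(dS no2T) /fs [x [Hx e]]; exists x; split => //; exact/(dS no2A).
have fE' : forall x y, DU x -> DU y -> (EA x y <-> @Tedge q (f x) (f y)).
  by move=> x y /(dS no2A) Hx /(dS no2A) Hy; apply: fE.
have Uin : forall x, U x -> DU x by move=> x Ux; exists x; split => //; apply: rt_refl.
have pU : forall p x, Q p -> p x -> U x by move=> p x [_ h _ _]; apply: h.
have W1 : forall p, Q p -> forall y, EA (w p) y <-> p y.
  move=> p Qp y; split; last by apply: hw.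
  have [cp _ _ _] := Qp; exact: (childA hAg no2A cp (hw p Qp)).
have W2 : forall p, Q p -> forall t, @Tedge q (w' p) t <-> img f p t.
  move=> p Qp t; split; last by apply: hw'.
  have [cp _ _ _] := Qp.
  have ci : card_eq q (img f p).
    apply: (@card_img _ _ q f p cp) => x y Hx Hy; apply: fi'; apply: Uin; exact: pU Hx || exact: pU Hy.
  exact: (childT ci (hw' p Qp)).
have two : forall p, Q p -> forall x, exists y, p y /\ y <> x.
  move=> p [[l [nd sz hl]] _ _ _] x.
  have hq' := hq; rewrite -sz in hq'.
  case: l nd hl hq' {sz} => [|a [|b l]] // nd hl _.
  have ab : a <> b by move=> e; subst; inversion nd; apply: H1; left.
  case: (classic (x = a)) => [->|xa].
  - exists b; split; last by move=> e; apply: ab.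
    by apply/(hl b); right; left.
  - exists a; split; last by move=> e; apply: xa.
    by apply/(hl a); left.
have fUV : forall u, U u -> V (f u).
  move=> u Uu; have [v [Vv Hv]] := fm' u (Uin u Uu).
  case: (rt_n1_dec Hv) => [<-|[z [Hz Ez]]] //; exfalso.
  have [y [Dy fy]] := fs' z (ex_intro _ v (conj Vv Hz)).
  have Eyu : EA y u by apply/(fE' y u Dy (Uin u Uu)); rewrite fy.
  have [u' [Uu' Hy]] := Dy.
  have Hu'u : RT EA u' u := rtt Hy (rts Eyu).
  case: (classic (u' = u)) => [e|ne].
  - subst u'; exact: (retA hAg no2A Hy Eyu).
  - exact: (hU' u' u Uu' Uu ne u Hu'u rtr).
have wDU : forall p, Q p -> ~ DU (w p).
  move=> p Qp [u [Uu Hu]].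
  have [y [py ne]] := two p Qp u.
  have Hy : RT EA u y := rtt Hu (rts ((W1 p Qp y).2 py)).
  exact: (hU' u y Uu (pU p y Qp py) (fun e => ne (esym e)) y Hy rtr).
have twoT : forall p, Q p -> forall t, exists y, p y /\ f y <> t.
  move=> p Qp t.
  have [y1 [p1 _]] := two p Qp (w p); have [y2 [p2 ne]] := two p Qp y1.
  case: (classic (f y1 = t)) => [e|ne1].
  - exists y2; split => // e2; apply: ne; apply: fi'; try apply: Uin; try exact: (pU p _ Qp).
    by rewrite e e2.
  - by exists y1.
have w'DV : forall p, Q p -> ~ DV (w' p).
  move=> p Qp [v [Vv Hv]].
  have [y [py ne]] := twoT p Qp v.
  have Hy : RT (@Tedge q) v (f y) := rtt Hv (rts ((W2 p Qp (f y)).2 (ex_intro _ y (conj py erefl)))).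
  exact: (hV' v (f y) Vv (fUV y (pU p y Qp py)) (fun e => ne (esym e)) (f y) Hy rtr).
have Ddec : forall p z, Q p -> RT EA (w p) z -> z = w p \/ exists c, p c /\ RT EA c z.
  move=> p z Qp H; case: (rt_1n_dec H) => [<-|[c [Ec Hc]]]; first by left.
  by right; exists c; split => //; apply/(W1 p Qp).
have DdecT : forall p z, Q p -> RT (@Tedge q) (w' p) z ->
    z = w' p \/ exists x, p x /\ RT (@Tedge q) (f x) z.
  move=> p z Qp H; case: (rt_1n_dec H) => [<-|[c [Ec Hc]]]; first by left.
  have [x [px fx]] := (W2 p Qp c).1 Ec.
  by right; exists x; split => //; rewrite fx.
have wT : forall p p', Q p -> Q p' -> w' p = w' p' -> p = p'.
  move=> p p' Qp Qp' e; apply: pred_ext => x; split => H.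
  - have : img f p' (f x) by apply/(W2 p' Qp'); rewrite -e; apply/(W2 p Qp); exists x.
    move=> [x' [px' fx']].
    by have <- : x' = x by exact: (fi' _ _ (Uin _ (pU p' _ Qp' px')) (Uin _ (pU p _ Qp H)) fx').
  - have : img f p (f x) by apply/(W2 p Qp); rewrite e; apply/(W2 p' Qp'); exists x.
    move=> [x' [px' fx']].
    by have <- : x' = x by exact: (fi' _ _ (Uin _ (pU p _ Qp px')) (Uin _ (pU p' _ Qp' H)) fx').
have wA : forall p p', Q p -> Q p' -> w p = w p' -> p = p'.
  move=> p p' Qp Qp' e; apply: pred_ext => x.
  by rewrite -(W1 p Qp) -(W1 p' Qp') e.
have parT : forall p p' x, Q p -> Q p' -> p x -> p' x -> p = p'.
  move=> p p' x Qp Qp' px px'; apply: wT => //.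
  have [i e1] := (W2 p Qp (f x)).2 (ex_intro _ x (conj px erefl)).
  have [i' e2] := (W2 p' Qp' (f x)).2 (ex_intro _ x (conj px' erefl)).
  by have [] := rcons_inj (etrans (esym e1) e2).
pose F := fun x => match excluded_middle_informative (exists p, Q p /\ x = w p) with
  | left H => w' (proj1_sig (constructive_indefinite_description _ H))
  | right _ => f x end.
have FW : forall p, Q p -> F (w p) = w' p.
  move=> p Qp; rewrite /F; case: excluded_middle_informative => [H|H].
  - case: constructive_indefinite_description => p0 [Q0 e] /=.
    by rewrite (wA p p0 Qp Q0 e).
  - by exfalso; apply: H; exists p.
have FU : forall x, DU x -> F x = f x.
  move=> x Dx; rewrite /F; case: excluded_middle_informative => [H|H] //.
  by exfalso; have [p [Qp e]] := H; apply: (wDU p Qp); rewrite -e.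
have cU : forall z, (exists u, U' u /\ RT EA u z) <-> DU z \/ exists p, Q p /\ z = w p.
  move=> z; split.
  - move=> [u [[[Uu _]|[p [Qp e]]] Hz]]; first by left; exists u.
    subst u; case: (Ddec p z Qp Hz) => [->|[c [pc Hc]]]; first by right; exists p.
    by left; exists c; split => //; exact: (pU p c Qp pc).
  - move=> [[u [Uu Hz]]|[p [Qp ->]]].
    + case: (classic (exists p, Q p /\ p u)) => [[p [Qp pu]]|nu].
      * exists (w p); split; first by right; exists p.
        exact: (rtt (rts ((W1 p Qp u).2 pu)) Hz).
      * by exists u; split => //; left.
    + by exists (w p); split; [right; exists p | apply: rtr].
have cV : forall z, (exists u, V' u /\ RT (@Tedge q) u z) <-> DV z \/ exists p, Q p /\ z = w' p.
  move=> z; split.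
  - move=> [u [[[Vu _]|[p [Qp e]]] Hz]]; first by left; exists u.
    subst u; case: (DdecT p z Qp Hz) => [->|[c [pc Hc]]]; first by right; exists p.
    by left; exists (f c); split => //; exact: (fUV c (pU p c Qp pc)).
  - move=> [[u [Vu Hz]]|[p [Qp ->]]].
    + case: (classic (exists p, Q p /\ img f p u)) => [[p [Qp pu]]|nu].
      * exists (w' p); split; first by right; exists p.
        exact: (rtt (rts ((W2 p Qp u).2 pu)) Hz).
      * by exists u; split => //; left.
    + by exists (w' p); split; [right; exists p | apply: rtr].
have C1 : forall u p z, U u -> ~ (exists p', Q p' /\ p' u) -> Q p ->
    RT EA u z -> RT EA (w p) z -> False.
  move=> u p z Uu nu Qp Hu Hw.
  case: (Ddec p z Qp Hw) => [e|[c [pc Hc]]].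
  - by subst z; apply: (wDU p Qp); exists u.
  - have ne : u <> c by move=> e; subst c; apply: nu; exists p.
    exact: (hU' u c Uu (pU p c Qp pc) ne z Hu Hc).
have C2 : forall p p' z, Q p -> Q p' -> w p <> w p' ->
    RT EA (w p) z -> RT EA (w p') z -> False.
  move=> p p' z Qp Qp' ne H H'.
  case: (Ddec p z Qp H) => [e|[c [pc Hc]]];
  case: (Ddec p' z Qp' H') => [e'|[c' [pc' Hc']]].
  - by apply: ne; rewrite -e -e'.
  - by subst z; apply: (wDU p Qp); exists c'; split => //; exact: (pU p' c' Qp' pc').
  - by subst z; apply: (wDU p' Qp'); exists c; split => //; exact: (pU p c Qp pc).
  - case: (classic (c = c')) => [ec|nc].
    + subst c'; apply: ne; by rewrite (parT p p' c Qp Qp' pc pc').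
    + exact: (hU' c c' (pU p c Qp pc) (pU p' c' Qp' pc') nc z Hc Hc').
have D1 : forall v p z, V v -> ~ (exists p', Q p' /\ img f p' v) -> Q p ->
    RT (@Tedge q) v z -> RT (@Tedge q) (w' p) z -> False.
  move=> v p z Vv nv Qp Hv Hw.
  case: (DdecT p z Qp Hw) => [e|[c [pc Hc]]].
  - by subst z; apply: (w'DV p Qp); exists v.
  - have ne : v <> f c by move=> e; apply: nv; exists p; split => //; exists c.
    exact: (hV' v (f c) Vv (fUV c (pU p c Qp pc)) ne z Hv Hc).
have D2 : forall p p' z, Q p -> Q p' -> w' p <> w' p' ->
    RT (@Tedge q) (w' p) z -> RT (@Tedge q) (w' p') z -> False.
  move=> p p' z Qp Qp' ne H H'.
  case: (DdecT p z Qp H) => [e|[c [pc Hc]]];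
  case: (DdecT p' z Qp' H') => [e'|[c' [pc' Hc']]].
  - by apply: ne; rewrite -e -e'.
  - by subst z; apply: (w'DV p Qp); exists (f c'); split => //; exact: (fUV c' (pU p' c' Qp' pc')).
  - by subst z; apply: (w'DV p' Qp'); exists (f c); split => //; exact: (fUV c (pU p c Qp pc)).
  - case: (classic (f c = f c')) => [ec|nc].
    + have ecc : c = c' := fi' c c' (Uin _ (pU p c Qp pc)) (Uin _ (pU p' c' Qp' pc')) ec.
      subst c'; apply: ne; by rewrite (parT p p' c Qp Qp' pc pc').
    + exact: (hV' (f c) (f c') (fUV c (pU p c Qp pc)) (fUV c' (pU p' c' Qp' pc')) nc z Hc Hc').
have indU : forall x y, U' x -> U' y -> x <> y ->
    forall v, RT EA x v -> RT EA y v -> False.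
  move=> x y [[Ux nx]|[p [Qp ex]]] [[Uy ny]|[p' [Qp' ey]]] ne v Hx Hy.
  - exact: (hU' x y Ux Uy ne v Hx Hy).
  - by subst y; exact: (C1 x p' v Ux nx Qp' Hx Hy).
  - by subst x; exact: (C1 y p v Uy ny Qp Hy Hx).
  - by subst x y; exact: (C2 p p' v Qp Qp' ne Hx Hy).
have indV : forall x y, V' x -> V' y -> x <> y ->
    forall v, RT (@Tedge q) x v -> RT (@Tedge q) y v -> False.
  move=> x y [[Ux nx]|[p [Qp ex]]] [[Uy ny]|[p' [Qp' ey]]] ne v Hx Hy.
  - exact: (hV' x y Ux Uy ne v Hx Hy).
  - by subst y; exact: (D1 x p' v Ux nx Qp' Hx Hy).
  - by subst x; exact: (D1 y p v Uy ny Qp Hy Hx).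
  - by subst x y; exact: (D2 p p' v Qp Qp' ne Hx Hy).
split.
- split.
    by move=> x y Hx Hy ne v /(dA x v) Hxv /(dA y v) Hyv; exact: (indU x y Hx Hy ne v Hxv Hyv).
  split.
    by move=> x y Hx Hy ne v /(dT x v) Hxv /(dT y v) Hyv; exact: (indV x y Hx Hy ne v Hxv Hyv).
  exists F; split.
  + by move=> x /(dS no2A) Dx; exact: FU.
  + exact: FW.
  + split.
    * move=> x /(dS no2A)/cU [Dx|[p [Qp ->]]]; apply/(dS no2T)/cV.
      - by left; rewrite FU //; apply: fm'.
      - by right; exists p; rewrite FW.
    * move=> x y /(dS no2A)/cU [Dx|[p [Qp ->]]] /(dS no2A)/cU [Dy|[p' [Qp' ->]]].
      - by rewrite (FU x Dx) (FU y Dy); exact: fi'.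
      - rewrite (FU x Dx) (FW p' Qp') => e; exfalso; apply: (w'DV p' Qp'); rewrite -e; exact: fm'.
      - rewrite (FU y Dy) (FW p Qp) => e; exfalso; apply: (w'DV p Qp); rewrite e; exact: fm'.
      - by rewrite (FW p Qp) (FW p' Qp') => e; rewrite (wT p p' Qp Qp' e).
    * move=> y /(dS no2T)/cV [Dy|[p [Qp ->]]].
      - have [x [Dx e]] := fs' y Dy; exists x; split; last by rewrite FU.
        by apply/(dS no2A)/cU; left.
      - exists (w p); split; last exact: FW.
        by apply/(dS no2A)/cU; right; exists p.
    * move=> x y /(dS no2A)/cU [Dx|[p [Qp ->]]] /(dS no2A)/cU [Dy|[p' [Qp' ->]]].
      - by rewrite (FU x Dx) (FU y Dy); exact: fE'.
      - rewrite (FU x Dx) (FW p' Qp'); split => H; exfalso.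
        + have [u [Uu Hu]] := Dx; apply: (wDU p' Qp'); exists u; split => //.
          exact: (rtt Hu (rts H)).
        + have [v [Vv Hv]] := fm' x Dx; apply: (w'DV p' Qp'); exists v; split => //.
          exact: (rtt Hv (rts H)).
      - rewrite (FU y Dy) (FW p Qp); split => H.
        + apply/(W2 p Qp); exists y; split => //; exact/(W1 p Qp).
        + have [x0 [px fx]] := (W2 p Qp (f y)).1 H.
          have exy : x0 = y := fi' x0 y (Uin _ (pU p x0 Qp px)) Dy fx.
          by apply/(W1 p Qp); rewrite -exy.
      - rewrite (FW p Qp) (FW p' Qp'); split => H; exfalso.
        + apply: (wDU p' Qp'); apply: Uin; exact: (pU p _ Qp ((W1 p Qp _).1 H)).
        + have [x0 [px fx]] := (W2 p Qp _).1 H; apply: (w'DV p' Qp'); rewrite -fx.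
          apply: fm'; apply: Uin; exact: (pU p x0 Qp px).
- move=> I hI hind.
  have hind' : forall x y, U x \/ I x -> U y \/ I y -> x <> y ->
      forall v, RT EA x v -> RT EA y v -> False.
    by move=> x y Hx Hy ne v H1 H2; apply: (hind x y Hx Hy ne v); apply/dA.
  have CI : forall i p z, I i -> Q p -> RT EA i z -> RT EA (w p) z -> False.
    move=> i p z Ii Qp Hi Hw; have [c [pc _]] := two p Qp i.
    have Uc := pU p c Qp pc.
    have nic : i <> c by move=> e; subst; exact: (hI _ Ii Uc).
    case: (Ddec p z Qp Hw) => [e|[c' [pc' Hc']]].
    + subst z.
      exact: (hind' i c (or_intror Ii) (or_introl Uc) nic c (rtt Hi (rts ((W1 p Qp c).2 pc))) rtr).
    + have Uc' := pU p c' Qp pc'.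
      have nic' : i <> c' by move=> e; subst; exact: (hI _ Ii Uc').
      exact: (hind' i c' (or_intror Ii) (or_introl Uc') nic' z Hi Hc').
  move=> x y Hx Hy ne v /(dA x v) Hxv /(dA y v) Hyv.
  case: Hx => [Hx|Ix]; case: Hy => [Hy|Iy].
  + exact: (indU x y Hx Hy ne v Hxv Hyv).
  + case: Hx => [[Ux _]|[p [Qp e]]].
    * exact: (hind' x y (or_introl Ux) (or_intror Iy) ne v Hxv Hyv).
    * by subst x; exact: (CI y p v Iy Qp Hyv Hxv).
  + case: Hy => [[Uy _]|[p [Qp e]]].
    * exact: (hind' x y (or_intror Ix) (or_introl Uy) ne v Hxv Hyv).
    * by subst y; exact: (CI x p v Ix Qp Hxv Hyv).
  + exact: (hind' x y (or_intror Ix) (or_intror Iy) ne v Hxv Hyv).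
Qed.
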